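(* Let $q,r,\nu$ be positive integers with $q+1\le\nu\le q+r-1$ (so $r\ge2$). Let \[ \bar K(z)=\begin{pmatrix} I_q\otimes F(z)+S_q\otimes F'(z) & -(\ell_q\varphi^\top)\otimes G(z)\\ 0 & I_{\nu-q}\otimes I_r-S_{\nu-q}\otimes G(z)\end{pmatrix}\in\mathbb{C}^{\nu r\times(\nu r-q)}. \] Then $\mathcal{N}^0(z)\bar K(z)=0$ for all $z$, and the columns of $\bar K(z)$ form a basis of the kernel of $\mathcal{N}^0(z)$.
   Context: Matrix indices start at $0$. $u(z)=(1,\dots,z^{q-1})^\top$, $w(z)=(1,\dots,z^{r-1})$, $M(z)=u(z)w(z)$, $\mathcal{N}^0(z)=\big(\frac{1}{0!}M(z),\dots,\frac{1}{(\nu-1)!}M^{(\nu-1)}(z)\big)\in\mathbb{C}^{q\times\nu r}$. $F(z)\in\mathbb{C}^{r\times(r-1)}$ has entries $F_{ii}=-z$, $F_{i+1,i}=1$, zero otherwise; $F'$ is its $z$-derivative. $G(z)\in\mathbb{C}^{r\times r}$ has entries $G_{ij}=z^{j-i-1}$ for $j>i$, $0$ otherwise. $S_n$ is the $n\times n$ shift matrix with $(S_n)_{ij}=\delta_{i+1,j}$. $\ell_q$ is the last standard basis vector of $\mathbb{R}^q$ and $\varphi$ the first standard basis vector of $\mathbb{R}^{\nu-q}$. Thus $\bar K$ has $q$ diagonal blocks $F$ (with $F'$ directly above each but the first), then $\nu-q$ diagonal blocks $I_r$ with $-G$ directly above each. *)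

(* Defs.v *)
From HB Require Import structures.
From mathcomp Require Import all_boot all_order all_algebra.
From mathcomp Require Import mxtens zify.
Set Implicit Arguments. Unset Strict Implicit. Unset Printing Implicit Defensive.
Import Order.TTheory GRing.Theory Num.Theory.
Local Open Scope ring_scope.

Section Defs.
Variable C : numClosedFieldType.

(* u(z) = (1, z, ..., z^(q-1))^T and w(z) = (1, z, ..., z^(r-1)) as
   polynomial vectors, so that M = u w is a polynomial matrix in z. *)
Definition upoly (q : nat) : 'cV[{poly C}]_q := \col_(i < q) 'X^i.
Definition wpoly (r : nat) : 'rV[{poly C}]_r := \row_(j < r) 'X^j.
Definition Mpoly (q r : nat) : 'M[{poly C}]_(q, r) := upoly q *m wpoly r.

Definition Mder (q r k : nat) (z : C) : 'M[C]_(q, r) :=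
  map_mx (fun p : {poly C} => (p^`(k)).[z]) (Mpoly q r).

Lemma sum_const_r (nu r : nat) : (\sum_(k < nu) r = nu * r)%N.
Proof. by rewrite sum_nat_const card_ord. Qed.

Definition N0 (q r nu : nat) (z : C) : 'M[C]_(q, nu * r) :=
  castmx (erefl q, sum_const_r nu r)
    (\mxrow_(k < nu) (((k`!)%:R)^-1 *: Mder q r k z)).

Definition Fpoly (r : nat) : 'M[{poly C}]_(r, r.-1) :=
  \matrix_(i < r, j < r.-1)
    (if (i == j :> nat) then - 'X else if (i == j.+1 :> nat) then 1 else 0).
Definition Fm (r : nat) (z : C) : 'M[C]_(r, r.-1) :=
  map_mx (fun p : {poly C} => p.[z]) (Fpoly r).
Definition Fder (r : nat) (z : C) : 'M[C]_(r, r.-1) :=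
  map_mx (fun p : {poly C} => (p^`()).[z]) (Fpoly r).

Definition Gm (r : nat) (z : C) : 'M[C]_r :=
  \matrix_(i < r, j < r) (if (i < j)%N then z ^+ (j - i - 1) else 0).

Definition shiftmx (n : nat) : 'M[C]_n :=
  \matrix_(i < n, j < n) ((i.+1 == j :> nat)%:R).

Definition ell (q : nat) : 'cV[C]_q := \col_(i < q) ((i == q.-1 :> nat)%:R).
Definition phi (n : nat) : 'cV[C]_n := \col_(i < n) ((i == 0 :> nat)%:R).

Lemma Kbar_rows (q r nu : nat) : (q <= nu)%N -> (q * r + (nu - q) * r = nu * r)%N.
Proof. by move=> h; rewrite -mulnDl subnKC. Qed.

Lemma Kbar_cols (q r nu : nat) : (q <= nu)%N -> (0 < r)%N ->
  (q * r.-1 + (nu - q) * r = nu * r - q)%N.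
Proof.
move=> h hr; rewrite -(Kbar_rows r h).
case: r hr => // r _ /=; nia.
Qed.

Definition Kbar (q r nu : nat) (hq : (q <= nu)%N) (hr : (0 < r)%N) (z : C)
  : 'M[C]_(nu * r, nu * r - q) :=
  castmx (Kbar_rows r hq, Kbar_cols hq hr)
   (block_mx
      (1%:M *t Fm r z + shiftmx q *t Fder r z)
      (- ((ell q *m (phi (nu - q))^T) *t Gm r z))
      0
      (1%:M *t (1%:M : 'M[C]_r) - shiftmx (nu - q) *t Gm r z)).

End Defs.

(* Main.v *)
Require Import Defs.
From HB Require Import structures.
From mathcomp Require Import all_boot all_order all_algebra.
From mathcomp Require Import mxtens.
From mathcomp Require Import zify ring lra.
Import Order.TTheory GRing.Theory Num.Theory.
Local Open Scope ring_scope.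
Set Implicit Arguments. Unset Strict Implicit. Unset Printing Implicit Defensive.

Lemma sum_lt_const (nu r s : nat) : (s <= nu)%N ->
  (\sum_(i < nu | (i < s)%N) r = s * r)%N.
Proof.
move=> h; rewrite -(big_ord_widen _ (fun _ => r) h) sum_nat_const card_ord //.
Qed.

Lemma sig_const (nu r : nat) (J : 'I_(\sum_(k < nu) r)) :
  (tagnat.sig1 J : nat) = (J %/ r)%N /\ (tagnat.sig2 J : nat) = (J %% r)%N.
Proof.
have h := tagnat.rect J.
have lt2 : (tagnat.sig2 J < r)%N by case: (tagnat.sig2 J).
rewrite sum_lt_const in h; last by apply: ltnW; case: (tagnat.sig1 J).
suff H : forall a b : nat, (b < r)%N -> (J:nat) = (a * r + b)%N -> a = (J %/ r)%N /\ b = (J %% r)%N.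
  exact: H lt2 h.
move=> a b hb ->.
rewrite divnMDl ?modnMDl ?divn_small ?modn_small ?addn0 //.
by case: (posnP r) hb => [->|].
Qed.


Section S.
Variable C : numClosedFieldType.
Definition gg (z : C) (n k : nat) : C := ('C(n,k))%:R * z ^+ (n - k).

Lemma gg_pascal z n k : gg z n.+1 k.+1 = z * gg z n k.+1 + gg z n k.
Proof.
rewrite /gg binS natrD mulrDl subSS; congr (_ + _).
case: (ltnP k n) => h.
  by rewrite mulrCA -exprS subnSK.
by rewrite bin_small ?ltnS // !mul0r mulr0.
Qed.

Lemma gg_pascal0 z n : gg z n.+1 0 = z * gg z n 0.
Proof. by rewrite /gg !bin0 !subn0 !mul1r exprS. Qed.

Lemma gg_small z n k : (n < k)%N -> gg z n k = 0.
Proof. by move=> h; rewrite /gg bin_small // mul0r. Qed.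

Lemma gg_hockey z a K i : (a <= K)%N ->
  gg z (a + i) K.+1 = \sum_(b < i) gg z (a + b) K * z ^+ (i - b - 1).
Proof.
move=> hK; elim: i => [|i IH].
  by rewrite big_ord0 addn0 gg_small // ltnS.
rewrite addnS gg_pascal IH big_ord_recr /=.
have -> : (i.+1 - i - 1 = 0)%N by lia.
rewrite expr0 mulr1; congr (_ + _).
rewrite big_distrr /=; apply: eq_bigr => b _.
rewrite mulrCA -exprS; congr (_ * _ ^+ _).
have := ltn_ord b; lia.
Qed.
Lemma N0E (q r nu : nat) (z : C) (a : 'I_q) (J : 'I_(nu * r)) :
  N0 q r nu z a J = gg z (a + J %% r) (J %/ r).
Proof.
rewrite /N0 castmxE mxE /Mder /Mpoly /upoly /wpoly !mxE big_ord1 !mxE.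

have [h1 h2] := sig_const (cast_ord (esym (sum_const_r nu r)) J).
rewrite -exprD derivnXn hornerMn hornerXn h1 h2 /= /gg.
have hk : ((J %/ r)`!)%:R != 0 :> C by rewrite pnatr_eq0 -lt0n fact_gt0.
rewrite -bin_ffact -[_ *+ (_ * _)]mulr_natr natrM.
by field.
Qed.
Lemma tens_div m n (k : 'I_m) (b : 'I_n) :
  ((mxtens_index (k, b) : nat) %/ n = k)%N /\ ((mxtens_index (k, b) : nat) %% n = b)%N.
Proof.
have := mxtens_indexK (k, b); rewrite /mxtens_unindex => -[] /(congr1 val) /= -> /(congr1 val) /= ->.
by [].
Qed.

Lemma mul_tensE m1 m2 n1 n2 p (N : 'M[C]_(p, m1 * m2)) (X : 'M[C]_(m1, n1))
  (Y : 'M[C]_(m2, n2)) a j l :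
  (N *m (X *t Y)) a (mxtens_index (j, l)) =
  \sum_(k < m1) \sum_(b < m2) N a (mxtens_index (k, b)) * (X k j * Y b l).
Proof.
rewrite mxE pair_big /=.
rewrite (reindex (@mxtens_index m1 m2)) /=; last first.
  by exists (@mxtens_unindex m1 m2) => x _; rewrite (mxtens_indexK, mxtens_unindexK).
apply: eq_bigr => -[k b] _ /=; by rewrite tensmxE.
Qed.

Definition upper n (A : 'M[C]_n) := forall i j : 'I_n, (j < i)%N -> A i j = 0.

Lemma det_upper n (A : 'M[C]_n) : upper A -> \det A = \prod_(i < n) A i i.
Proof.
move=> h; rewrite -det_tr det_trig; last by apply/is_trig_mxP => i j lij; rewrite mxE h.
by apply: eq_bigr => i _; rewrite mxE.
Qed.

Lemma upper_tens m n (X : 'M[C]_m) (Y : 'M[C]_n) : upper X -> upper Y -> upper (X *t Y).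
Proof.
move=> hX hY i j; case: (mxtens_indexP i) => i1 i2; case: (mxtens_indexP j) => j1 j2 /=.
rewrite tensmxE => hlt.
case: (ltngtP j1 i1) => h1; first by rewrite hX // mul0r.
  exfalso; have h3 : (i1.+1 * n <= j1 * n)%N by rewrite leq_mul2r h1 orbT.
  have := ltn_ord i2; rewrite mulSn in h3; lia.
have e : j1 = i1 by apply: val_inj.
rewrite e hY ?mulr0 //; move: hlt; rewrite h1; lia.
Qed.

Lemma upperD n (A B : 'M[C]_n) : upper A -> upper B -> upper (A + B).
Proof. by move=> hA hB i j h; rewrite mxE hA ?hB ?addr0. Qed.
Lemma upperN n (A : 'M[C]_n) : upper A -> upper (- A).
Proof. by move=> hA i j h; rewrite mxE hA ?oppr0. Qed.
Lemma upper1 n : upper (1%:M : 'M[C]_n).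
Proof. move=> i j h; rewrite mxE; case: eqP => // e; move: h; rewrite e ltnn //. Qed.

Lemma tens_diag m n (X : 'M[C]_m) (Y : 'M[C]_n) (i1 : 'I_m) (i2 : 'I_n) :
  (X *t Y) (mxtens_index (i1, i2)) (mxtens_index (i1, i2)) = X i1 i1 * Y i2 i2.
Proof. by rewrite tensmxE. Qed.

Lemma sum_if n (i0 : 'I_n) (F : 'I_n -> C) :
  \sum_(b < n) (if b == i0 then F b else 0) = F i0.
Proof. by rewrite -big_mkcond big_pred1_eq. Qed.

Lemma FmE r (z : C) (b : 'I_r) (i : 'I_r.-1) :
  Fm r z b i = if (b == i :> nat) then - z else if (b == i.+1 :> nat) then 1 else 0.
Proof.
rewrite /Fm /Fpoly !mxE; case: (b == i :> nat); first by rewrite hornerN hornerX.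
by case: (b == i.+1 :> nat); rewrite ?hornerC.
Qed.

Lemma FderE r (z : C) (b : 'I_r) (i : 'I_r.-1) :
  Fder r z b i = if (b == i :> nat) then - 1 else 0.
Proof.
rewrite /Fder /Fpoly !mxE; case: (b == i :> nat).
  by rewrite derivN derivX hornerN hornerC.
by case: (b == i.+1 :> nat); rewrite ?derivC ?deriv0 ?hornerC ?horner0.
Qed.

Lemma GmE r (z : C) (b i : 'I_r) : Gm r z b i = if (b < i)%N then z ^+ (i - b - 1) else 0.
Proof. by rewrite /Gm mxE. Qed.

Lemma ltS_pred r (i : 'I_r.-1) : (i.+1 < r)%N.
Proof. have := ltn_ord i; lia. Qed.
Lemma lt_pred r (i : 'I_r.-1) : (i < r)%N.
Proof. have := ltn_ord i; lia. Qed.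

Lemma sum_F r (z : C) (f : nat -> C) (i : 'I_r.-1) :
  \sum_(b < r) f b * Fm r z b i = f i * (- z) + f i.+1.
Proof.
pose io := Ordinal (lt_pred i); pose i1 := Ordinal (ltS_pred i).
rewrite -(sum_if io (fun b => f b * - z)) -(sum_if i1 f) -big_split /=.
apply: eq_bigr => b _; rewrite FmE -!val_eqE /=.
case: eqP => [->|_]; first by rewrite (_ : ((i:nat) == i.+1) = false) ?addr0 //; lia.
by case: eqP => [->|_]; rewrite ?mulr1 ?mulr0 add0r.
Qed.

Lemma sum_Fder r (z : C) (f : nat -> C) (i : 'I_r.-1) :
  \sum_(b < r) f b * Fder r z b i = - f i.
Proof.
pose io := Ordinal (lt_pred i).
rewrite -(sum_if io (fun b => - f b)) /=.
apply: eq_bigr => b _; rewrite FderE -!val_eqE /=.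
by case: eqP => [->|_]; rewrite ?mulrN1 ?mulr0.
Qed.

Lemma sum_G r (z : C) (f : nat -> C) (i : 'I_r) :
  \sum_(b < r) f b * Gm r z b i = \sum_(b < i) f b * z ^+ (i - b - 1).
Proof.
rewrite (big_ord_widen r (fun b => f b * z ^+ (i - b - 1)) (ltnW (ltn_ord i))).
rewrite [RHS]big_mkcond /=; apply: eq_bigr => b _; rewrite GmE.
by case: ifP; rewrite ?mulr0.
Qed.

Lemma sum_1 r (f : nat -> C) (i : 'I_r) :
  \sum_(b < r) f b * (1%:M : 'M[C]_r) b i = f i.
Proof.
rewrite -(sum_if i f); apply: eq_bigr => b _; rewrite mxE.
by case: eqP; rewrite ?mulr1 ?mulr0.
Qed.

Lemma sum_collapse m1 m2 n1 n2 p (N : 'M[C]_(p, m1 * m2)) (X : 'M[C]_(m1, n1))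
  (Y : 'M[C]_(m2, n2)) a j l (k0 : 'I_m1) :
  (forall k, k != k0 -> X k j = 0) ->
  (N *m (X *t Y)) a (mxtens_index (j, l)) =
  X k0 j * \sum_(b < m2) N a (mxtens_index (k0, b)) * Y b l.
Proof.
move=> hX; rewrite mul_tensE (bigD1 k0) //= [X in _ + X]big1 ?addr0 => [|k hk].
  rewrite big_distrr /=; apply: eq_bigr => b _; ring.
by apply: big1 => b _; rewrite hX // mul0r mulr0.
Qed.
Definition N1 q r (z : C) : 'M[C]_(q, q * r) := \matrix_(a, J) gg z (a + J %% r) (J %/ r).
Definition N2 q r nu (z : C) : 'M[C]_(q, (nu - q) * r) :=
  \matrix_(a, J) gg z (a + J %% r) (q + J %/ r).

Lemma N1E q r (z : C) a (k : 'I_q) (b : 'I_r) :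
  N1 q r z a (mxtens_index (k, b)) = gg z (a + b) k.
Proof. by rewrite mxE; have [-> ->] := tens_div k b. Qed.
Lemma N2E q r nu (z : C) a (k : 'I_(nu - q)) (b : 'I_r) :
  N2 q r nu z a (mxtens_index (k, b)) = gg z (a + b) (q + k).
Proof. by rewrite mxE; have [-> ->] := tens_div k b. Qed.

Lemma N0_split q r nu (z : C) (hq : (q <= nu)%N) (hr : (0 < r)%N) :
  N0 q r nu z = castmx (erefl q, Kbar_rows r hq) (row_mx (N1 q r z) (N2 q r nu z)).
Proof.
apply/matrixP => a J; rewrite castmxE N0E mxE /=.
case: splitP => [j e|k e]; rewrite mxE /=; first by rewrite -e.
have e' : (J : nat) = (q * r + k)%N by rewrite -e.
by rewrite e' modnMDl divnMDl.
Qed.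

Lemma cast_mul_cast p m m' n n' (e1 : m = m') (e2 : n = n') (M : 'M[C]_(p, m))
  (K : 'M[C]_(m, n)) :
  castmx (erefl p, e1) M *m castmx (e1, e2) K = castmx (erefl p, e2) (M *m K).
Proof. by case: m' / e1; case: n' / e2; rewrite !castmx_id. Qed.

Lemma shiftE n (k j : 'I_n) : shiftmx C n k j = (k.+1 == j :> nat)%:R.
Proof. by rewrite mxE. Qed.

Lemma N1A q r (z : C) : (0 < q)%N ->
  N1 q r z *m (1%:M *t Fm r z + shiftmx C q *t Fder r z) = 0.
Proof.
move=> hq; apply/matrixP => a J; case: (mxtens_indexP J) => j i.
rewrite mulmxDr mxE [RHS]mxE.
rewrite (@sum_collapse _ _ _ _ _ _ _ _ _ _ _ j); last first.
  by move=> k hk; rewrite mxE (negbTE hk).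
under eq_bigr => b _ do rewrite N1E.
rewrite (sum_F z (fun b => gg z (a + b) j)) mxE eqxx mul1r.
have [j0|jpos] := posnP j.
  rewrite (@sum_collapse _ _ _ _ _ _ _ _ _ _ _ j); last first.
    by move=> k hk; rewrite shiftE j0.
  rewrite shiftE (_ : (j.+1 == j :> nat) = false) ?eqn_leq ?ltnn // mul0r addr0 j0 addnS gg_pascal0; ring.
have hj : (j.-1 < q)%N by have := ltn_ord j; lia.
rewrite (@sum_collapse _ _ _ _ _ _ _ _ _ _ _ (Ordinal hj)); last first.
  move=> k hk; rewrite shiftE; case: eqP => // e; case/eqP: hk; apply: val_inj => /=; lia.
under eq_bigr => b _ do rewrite N1E.
rewrite (sum_Fder z (fun b => gg z (a + b) (Ordinal hj))) shiftE /= prednK // eqxx mul1r.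
rewrite -[in gg z (a + i.+1) j](prednK jpos) addnS gg_pascal prednK //; ring.
Qed.
Lemma addmxE' m n (A B : 'M[C]_(m, n)) i j : (A + B) i j = A i j + B i j.
Proof. by rewrite mxE. Qed.
Lemma oppmxE' m n (A : 'M[C]_(m, n)) i j : (- A) i j = - A i j.
Proof. by rewrite mxE. Qed.
Lemma zeromxE' m n i j : (0 : 'M[C]_(m, n)) i j = 0.
Proof. by rewrite mxE. Qed.

Lemma ellphiE q n (k : 'I_q) (m : 'I_n) :
  (ell C q *m (phi C n)^T) k m = ((k == q.-1 :> nat) && (m == 0 :> nat))%:R.
Proof. by rewrite mxE big_ord1 !mxE -natrM mulnb. Qed.

Lemma N12B q r nu (z : C) : (0 < q)%N ->
  N1 q r z *m (- ((ell C q *m (phi C (nu - q))^T) *t Gm r z)) +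
  N2 q r nu z *m (1%:M *t (1%:M : 'M[C]_r) - shiftmx C (nu - q) *t Gm r z) = 0.
Proof.
move=> hq; apply/matrixP => a J; case: (mxtens_indexP J) => m i.
rewrite mulmxN mulmxBr !addmxE' !oppmxE' zeromxE'.
have hq1 : (q.-1 < q)%N by lia.
rewrite (@sum_collapse _ _ _ _ _ _ _ _ _ _ _ (Ordinal hq1)); last first.
  move=> k hk; rewrite ellphiE; case: eqP => //= e; case/eqP: hk; exact: val_inj.
under eq_bigr => b _ do rewrite N1E.
rewrite (sum_G z (fun b => gg z (a + b) (Ordinal hq1))) ellphiE /= eqxx /=.
rewrite (@sum_collapse _ _ _ _ _ _ _ _ _ _ _ m); last first.
  by move=> k hk; rewrite mxE (negbTE hk).
under [X in 1%:M _ _ * X]eq_bigr => b _ do rewrite N2E.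
rewrite (sum_1 (fun b => gg z (a + b) (q + m))) mxE eqxx mul1r.
have ha : (a <= q.-1)%N by have := ltn_ord a; lia.
have [m0|mpos] := posnP m.
  rewrite (@sum_collapse _ _ _ _ _ _ _ _ _ _ _ m); last first.
    by move=> k hk; rewrite shiftE m0.
  rewrite shiftE (_ : (m.+1 == m :> nat) = false) ?eqn_leq ?ltnn // mul0r subr0.
  have e : gg z (a + i) q = gg z (a + i) q.-1.+1 by rewrite prednK.
  rewrite m0 addn0 e (gg_hockey z i ha) /= mul1r; ring.
have hm : (m.-1 < nu - q)%N by have := ltn_ord m; lia.
rewrite (@sum_collapse _ _ _ _ _ _ _ _ _ _ _ (Ordinal hm)); last first.
  move=> k hk; rewrite shiftE; case: eqP => // e; case/eqP: hk; apply: val_inj => /=; lia.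
under [X in _ - _ * X]eq_bigr => b _ do rewrite N2E.
rewrite (sum_G z (fun b => gg z (a + b) (q + Ordinal hm))) shiftE /= prednK // eqxx mul1r.
rewrite mul0r oppr0 add0r.
have ha2 : (a <= q + m.-1)%N by lia.
rewrite -[in gg z (a + i) (q + m)](prednK mpos) addnS (gg_hockey z i ha2); ring.
Qed.
Lemma N0K q r nu (z : C) (hqnu : (q < nu)%N) (hq : (0 < q)%N) (hr : (0 < r)%N) :
  N0 q r nu z *m Kbar (ltnW hqnu) hr z = 0.
Proof.
rewrite (N0_split z (ltnW hqnu) hr) /Kbar cast_mul_cast mul_row_block mulmx0 addr0.
rewrite N1A // N12B // row_mx0.
by apply/matrixP => i j; rewrite castmxE !mxE.
Qed.
Lemma rankN0 q r nu (z : C) (hqnu : (q < nu)%N) (hr : (0 < r)%N) :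
  \rank (N0 q r nu z) = q.
Proof.
pose P : 'M[C]_(nu * r, q) := \matrix_(J, k) ((J : nat) == (k : nat) * r)%:R.
have hP : forall (a k : 'I_q), (N0 q r nu z *m P) a k = gg z a k.
  move=> a k; rewrite mxE.
  have hk : ((k : nat) * r < nu * r)%N.
    by rewrite ltn_pmul2r // (ltn_trans (ltn_ord k)).
  transitivity (N0 q r nu z a (Ordinal hk)); last first.
    by rewrite N0E /= modnMl mulnK // addn0.
  rewrite -(sum_if (Ordinal hk) (fun J => N0 q r nu z a J)).
  apply: eq_bigr => J _; rewrite mxE -val_eqE /=.
  by case: eqP; rewrite ?mulr1 ?mulr0.
have hu : N0 q r nu z *m P \in unitmx.
  rewrite unitmxE det_trig; last first.
    by apply/is_trig_mxP => i j hij; rewrite hP gg_small.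
  rewrite big1 ?unitr1 // => i _.
  by rewrite hP /gg binn subnn expr0 mulr1.
apply/eqP; rewrite eqn_leq rank_leq_row /=.
by rewrite -{1}(mxrank_unit hu) mxrankM_maxl.
Qed.
Definition P0 r : 'M[C]_(r.-1, r) := \matrix_(i, j) ((j : nat) == i.+1)%:R.

Lemma P0FmE r (z : C) (i j : 'I_r.-1) :
  (P0 r *m Fm r z) i j = Fm r z (Ordinal (ltS_pred i)) j.
Proof.
rewrite mxE -(sum_if (Ordinal (ltS_pred i)) (fun b => Fm r z b j)).
apply: eq_bigr => b _; rewrite mxE -val_eqE /=.
by case: eqP; rewrite ?mul1r ?mul0r.
Qed.

Lemma P0FderE r (z : C) (i j : 'I_r.-1) :
  (P0 r *m Fder r z) i j = Fder r z (Ordinal (ltS_pred i)) j.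
Proof.
rewrite mxE -(sum_if (Ordinal (ltS_pred i)) (fun b => Fder r z b j)).
apply: eq_bigr => b _; rewrite mxE -val_eqE /=.
by case: eqP; rewrite ?mul1r ?mul0r.
Qed.

Lemma upperS n : upper (shiftmx C n).
Proof. move=> i j h; rewrite shiftE; case: eqP => // e; move: h; lia. Qed.
Lemma upperG r (z : C) : upper (Gm r z).
Proof. move=> i j h; rewrite GmE; case: ifP => // h2; move: h h2; lia. Qed.
Lemma upperT r (z : C) : upper (P0 r *m Fm r z).
Proof.
move=> i j h; rewrite P0FmE FmE /=; case: eqP => [e|_]; first by move: h; lia.
by case: eqP => // e; move: h; lia.
Qed.
Lemma upperT' r (z : C) : upper (P0 r *m Fder r z).
Proof.
by move=> i j h; rewrite P0FderE FderE /=; case: eqP => // e; move: h; lia.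
Qed.

Lemma det_U1 q r (z : C) :
  \det (1%:M *t (P0 r *m Fm r z) + shiftmx C q *t (P0 r *m Fder r z)) = 1.
Proof.
rewrite det_upper; last first.
  by apply: upperD; apply: upper_tens; first [exact: upper1 | exact: upperT | exact: upperS | exact: upperT'].
rewrite big1 // => J _; case: (mxtens_indexP J) => j i.
rewrite addmxE' !tens_diag P0FmE P0FderE FmE FderE /= shiftE !mxE eqxx /=.
rewrite (_ : (i.+1 == i :> nat) = false) ?eqn_leq ?ltnn //.
by rewrite ltnSn mul1r mulr0 addr0.
Qed.

Lemma det_D n r (z : C) :
  \det (1%:M *t (1%:M : 'M[C]_r) - shiftmx C n *t Gm r z) = 1.
Proof.
rewrite det_upper; last first.
  by apply: upperD; [apply: upper_tens; apply: upper1|apply/upperN/upper_tens; [apply: upperS|apply: upperG]].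
rewrite big1 // => J _; case: (mxtens_indexP J) => j i.
rewrite addmxE' oppmxE' !tens_diag shiftE GmE !mxE !eqxx ltnn /=.
by rewrite (_ : (j.+1 == j :> nat) = false) ?eqn_leq ?ltnn // mul0r subr0 mulr1.
Qed.

Lemma K0_inj q r nu (z : C) p (X : 'M[C]_(q * r.-1 + (nu - q) * r, p)) :
  block_mx (1%:M *t Fm r z + shiftmx C q *t Fder r z)
      (- ((ell C q *m (phi C (nu - q))^T) *t Gm r z))
      0
      (1%:M *t (1%:M : 'M[C]_r) - shiftmx C (nu - q) *t Gm r z) *m X = 0 -> X = 0.
Proof.
set K0 := block_mx _ _ _ _.
pose Pt := block_mx (1%:M *t P0 r : 'M[C]_(q * r.-1, q * r)) 0 0 (1%:M : 'M[C]_((nu - q) * r)).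
have hu : Pt *m K0 \in unitmx.
  rewrite unitmxE /Pt /K0 mulmx_block !mul0mx !mulmx0 !addr0 !add0r mul1mx.
  rewrite det_ublock mulmxDr !tensmx_mul !mul1mx det_U1 det_D mulr1 unitr1 //.
move=> h; rewrite -(mulKmx hu X) -mulmxA h mulmx0 mulmx0 //.
Qed.

Lemma cast_mul_l m m' n n' p (e1 : m = m') (e2 : n = n') (K : 'M[C]_(m, n))
  (X : 'M[C]_(n', p)) :
  castmx (e1, e2) K *m X = castmx (e1, erefl p) (K *m castmx (esym e2, erefl p) X).
Proof. by case: m' / e1; case: n' / e2 in X *; rewrite !castmx_id. Qed.

Lemma castmx_eq0 m m' n n' (e1 : m = m') (e2 : n = n') (A : 'M[C]_(m, n)) :
  castmx (e1, e2) A = 0 -> A = 0.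
Proof. by case: m' / e1; case: n' / e2; rewrite castmx_id. Qed.

Lemma Kbar_inj q r nu (z : C) (hqnu : (q < nu)%N) (hr : (0 < r)%N) p
  (X : 'M[C]_(nu * r - q, p)) : Kbar (ltnW hqnu) hr z *m X = 0 -> X = 0.
Proof.
by rewrite /Kbar cast_mul_l => /castmx_eq0 /K0_inj /castmx_eq0.
Qed.

End S.

Unset Implicit Arguments.
Theorem proposition4p6 (C : numClosedFieldType) (q r nu : nat)
  (hq0 : (0 < q)%N) (hr0 : (0 < r)%N) (hnu0 : (0 < nu)%N)
  (hqnu : (q < nu)%N) (hnur : (nu <= q + r - 1)%N) :
  (forall z : C, N0 q r nu z *m Kbar (ltnW hqnu) hr0 z = 0) /\
  (forall z : C,
     (forall x : 'cV[C]_(nu * r),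
        N0 q r nu z *m x = 0 <-> exists c : 'cV[C]_(nu * r - q), x = Kbar (ltnW hqnu) hr0 z *m c) /\
     (forall c : 'cV[C]_(nu * r - q), Kbar (ltnW hqnu) hr0 z *m c = 0 -> c = 0)).
Proof.
split; first by move=> z; exact: N0K.
move=> z; split; last by move=> c; exact: Kbar_inj.
have hNK := N0K z hqnu hq0 hr0.
set K := Kbar (ltnW hqnu) hr0 z in hNK *.
set N := N0 q r nu z in hNK *.
have hsub : (K^T <= kermx N^T)%MS by rewrite sub_kermx -trmx_mul hNK trmx0 eqxx.
have hrK : \rank K^T = (nu * r - q)%N.
  apply/eqP; change (row_free K^T); rewrite -kermx_eq0; apply/eqP.
  have h := mulmx_ker K^T.
  have h1 : K *m (kermx K^T)^T = 0 by have := congr1 trmx h; rewrite trmx_mul trmxK trmx0.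
  by rewrite -[kermx _]trmxK (Kbar_inj h1) trmx0.
have heq : (K^T == kermx N^T)%MS.
  by rewrite -(mxrank_leqif_eq hsub).2 mxrank_ker hrK mxrank_tr /N rankN0.
move=> x; split.
  move=> hx.
  have hx1 : (x^T <= kermx N^T)%MS by rewrite sub_kermx -trmx_mul hx trmx0 eqxx.
  have hx2 : (x^T <= K^T)%MS by move/andP: heq => [_ h2]; exact: submx_trans hx1 h2.
  case/submxP: hx2 => D hD; exists D^T.
  by rewrite -[x]trmxK hD trmx_mul trmxK.
by case=> c ->; rewrite mulmxA hNK mul0mx.
Qed.
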